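(* Let $d\geq 1$, $n\geq 1$, let $X^{(n)}=\{X_1,\dots,X_n\}\subset\mathbb{R}^d$ be a target sample and let $u^{(n)}=\{u_1,\dots,u_n\}\subset\mathbb{R}^d$ be a reference sample in general position (no more than $d$ of the points lie in any $(d-1)$-dimensional affine subspace). Let $\hat T$ be a solution of the discrete optimal transport problem from $u^{(n)}$ to $X^{(n)}$. Then for every $i\in\{1,\dots,n\}$, $$\mathrm{BP}(\hat T(u_i))\in\left[\mathrm{TD}(u_i;u^{(n)})-\frac{d-1}{n},\ \mathrm{TD}(u_i;u^{(n)})\right].$$
   Context: For finite sets $u^{(n)}=\{u_1,\dots,u_n\}$ and $Z^{(n)}=\{Z_1,\dots,Z_n\}$ in $\mathbb{R}^d$, let $\Gamma(u^{(n)},Z^{(n)})$ be the set of bijections $T:u^{(n)}\to Z^{(n)}$; an empirical optimal transport map $\hat T_{Z^{(n)}}$ is any minimizer of $T\mapsto\frac1n\sum_{i=1}^n\|T(u_i)-u_i\|^2$ over $\Gamma(u^{(n)},Z^{(n)})$, and $\hat T=\hat T_{X^{(n)}}$. For $\ell\in\{1,\dots,n\}$, $\mathcal{Q}_{\ell,n}$ is the set of all sets $Z^{(n)}=\{Z_1,\dots,Z_n\}\subset\mathbb{R}^d$ sharing exactly $n-\ell$ elements with $X^{(n)}$. The finite sample breakdown point is $$\mathrm{BP}(\hat T(u_i))=\frac1n\min\Big\{\ell\in\{1,\dots,n\}:\ \sup_{Z^{(n)}\in\mathcal{Q}_{\ell,n}}\|\hat T(u_i)-\hat T_{Z^{(n)}}(u_i)\|=\infty\Big\}.$$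 The Tukey depth of $x\in\mathbb{R}^d$ w.r.t. $u^{(n)}$ is $\mathrm{TD}(x;u^{(n)})=\min_{v\in\mathcal{S}^{d-1}}\frac1n\sum_{j=1}^n\mathbf{1}(\langle v,u_j-x\rangle\geq 0)$, where $\mathcal{S}^{d-1}$ is the unit sphere. *)

(* Defs.v *)
From HB Require Import structures.
From mathcomp Require Import all_boot all_order all_algebra all_fingroup.
From mathcomp Require Import all_classical all_reals.
Set Implicit Arguments. Unset Strict Implicit. Unset Printing Implicit Defensive.
Import Order.TTheory GRing.Theory Num.Theory.
Local Open Scope ring_scope.
Local Open Scope classical_set_scope.

Section Defs.
Variables (R : realType) (d n : nat).

Definition dotv (x y : 'rV[R]_d) : R := \sum_(j < d) x 0 j * y 0 j.
Definition enorm (x : 'rV[R]_d) : R := Num.sqrt (dotv x x).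

(* Samples are indexed families of n points; sets of n points = injective families. *)
Definition general_position (u : 'I_n -> 'rV[R]_d) : Prop :=
  forall (w : 'rV[R]_d) (c : R), w != 0 ->
    (#|[set j : 'I_n | dotv w (u j) == c]| <= d)%N.

Definition ot_cost (u Z : 'I_n -> 'rV[R]_d) (s : 'S_n) : R :=
  n%:R^-1 * \sum_(i < n) dotv (Z (s i) - u i) (Z (s i) - u i).

Definition is_ot (u Z : 'I_n -> 'rV[R]_d) (s : 'S_n) : Prop :=
  forall t : 'S_n, ot_cost u Z s <= ot_cost u Z t.

Definition inQ (l : nat) (X Z : 'I_n -> 'rV[R]_d) : Prop :=
  injective Z /\
  #|[set j : 'I_n | [exists k : 'I_n, Z j == X k]]| = (n - l)%N.

(* sel Z is the chosen empirical OT map T_Z (via T_Z(u_i) = Z (sel Z i)). *)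
Definition breaks (u X : 'I_n -> 'rV[R]_d)
    (sel : ('I_n -> 'rV[R]_d) -> 'S_n) (i : 'I_n) (l : nat) : Prop :=
  forall M : R, exists Z : 'I_n -> 'rV[R]_d,
    inQ l X Z /\ M < enorm (X (sel X i) - Z (sel Z i)).

Definition is_BP (u X : 'I_n -> 'rV[R]_d)
    (sel : ('I_n -> 'rV[R]_d) -> 'S_n) (i : 'I_n) (b : R) : Prop :=
  exists l : nat, [/\ (1 <= l <= n)%N, breaks u X sel i l,
    (forall l' : nat, (1 <= l' < l)%N -> ~ breaks u X sel i l')
    & b = l%:R / n%:R].

Definition tukey_depth (u : 'I_n -> 'rV[R]_d) (x : 'rV[R]_d) : R :=
  inf [set (#|[set j : 'I_n | 0 <= dotv v (u j - x)]|)%:R / n%:R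
       | v in [set v : 'rV[R]_d | enorm v = 1]].

End Defs.

(* Main.v *)
Require Import Defs.
From HB Require Import structures.
From mathcomp Require Import all_boot all_order all_algebra all_fingroup.
From mathcomp Require Import all_classical all_reals.
From mathcomp Require Import ring lra zify.
Import Order.TTheory GRing.Theory Num.Theory.
Set Implicit Arguments. Unset Strict Implicit. Unset Printing Implicit Defensive.
Local Open Scope ring_scope.

Section Dot.
Variables (R : realType) (d : nat).
Implicit Types (x y z a b : 'rV[R]_d).

Lemma dotvC x y : dotv x y = dotv y x.
Proof. by apply: eq_bigr => j _; rewrite mulrC. Qed.
Lemma dotvDl x y z : dotv (x + y) z = dotv x z + dotv y z.
Proof. by rewrite /dotv -big_split; apply: eq_bigr => j _; rewrite mxE mulrDl. Qed.
Lemma dotvNl x z : dotv (- x) z = - dotv x z.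
Proof. by rewrite /dotv -sumrN; apply: eq_bigr => j _; rewrite mxE mulNr. Qed.
Lemma dotvBl x y z : dotv (x - y) z = dotv x z - dotv y z.
Proof. by rewrite dotvDl dotvNl. Qed.
Lemma dotvZl (c : R) x z : dotv (c *: x) z = c * dotv x z.
Proof. by rewrite /dotv mulr_sumr; apply: eq_bigr => j _; rewrite mxE mulrA. Qed.
Lemma dotvDr x y z : dotv z (x + y) = dotv z x + dotv z y.
Proof. by rewrite dotvC dotvDl !(dotvC z). Qed.
Lemma dotvBr x y z : dotv z (x - y) = dotv z x - dotv z y.
Proof. by rewrite dotvC dotvBl !(dotvC z). Qed.
Lemma dotvZr (c : R) x z : dotv z (c *: x) = c * dotv z x.
Proof. by rewrite dotvC dotvZl dotvC. Qed.
Lemma dotv_ge0 x : 0 <= dotv x x.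
Proof. by apply: sumr_ge0 => j _; rewrite -expr2 sqr_ge0. Qed.
Lemma dotv0l x : dotv 0 x = 0.
Proof. by rewrite /dotv big1 // => j _; rewrite mxE mul0r. Qed.

Lemma swap_id a b x y :
  dotv (a - x) (a - x) + dotv (b - y) (b - y) - dotv (b - x) (b - x)
  - dotv (a - y) (a - y) = - (2 * dotv (a - b) (x - y)).
Proof.
rewrite !(dotvBl, dotvBr) (dotvC x a) (dotvC y b) (dotvC x b) (dotvC y a).
ring.
Qed.

Lemma enormZ (c : R) x : 0 <= c -> enorm (c *: x) = c * enorm x.
Proof.
move=> c0; rewrite /enorm dotvZl dotvZr mulrA -expr2 sqrtrM ?sqr_ge0 //.
by rewrite sqrtr_sqr ger0_norm.
Qed.

Lemma enorm_gt_sqr (M : R) x : 0 <= M -> M ^+ 2 < dotv x x -> M < enorm x.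
Proof.
move=> M0 h; rewrite /enorm -[M in M < _](ger0_norm M0) -sqrtr_sqr ltr_sqrt //.
by apply: le_lt_trans h; rewrite sqr_ge0.
Qed.

End Dot.

Section Perm.
Variables (R : realType) (n : nat).
Lemma sum_swap (F : 'I_n -> 'I_n -> R) (s : 'S_n) (i j : 'I_n) : i != j ->
  \sum_k F k ((tperm i j * s)%g k) =
  \sum_k F k (s k) - F i (s i) - F j (s j) + F i (s j) + F j (s i).
Proof.
move=> ij.
rewrite (bigD1 i) // (bigD1 j) 1?eq_sym //= [in RHS](bigD1 i) // [in RHS](bigD1 j) 1?eq_sym //=.
rewrite !permM tpermL tpermR.
rewrite (eq_bigr (fun k => F k (s k))); last first.
  by move=> k /andP[ki kj]; rewrite permM tpermD // eq_sym.
ring.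
Qed.
End Perm.
Section Ev.
Variable (R : realType).
Definition evinf (P : R -> Prop) := exists T : R, forall t, T < t -> P t.
Definition ev0 (P : R -> Prop) := exists e : R, 0 < e /\ forall x, 0 < x -> x <= e -> P x.

Lemma evinf_and P Q : evinf P -> evinf Q -> evinf (fun t => P t /\ Q t).
Proof.
move=> [T1 h1] [T2 h2]; exists (Num.max T1 T2) => t; rewrite gt_max => /andP[a b].
by split; [apply: h1|apply: h2].
Qed.
Lemma ev0_and P Q : ev0 P -> ev0 Q -> ev0 (fun t => P t /\ Q t).
Proof.
move=> [e1 [e1p h1]] [e2 [e2p h2]]; exists (Num.min e1 e2); split.
  by rewrite lt_min e1p e2p.
by move=> x x0; rewrite le_min => /andP[a b]; split; [apply: h1|apply: h2].
Qed.
Lemma evinf_fin (I : finType) (P : I -> R -> Prop) :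
  (forall p, evinf (P p)) -> evinf (fun t => forall p, P p t).
Proof.
move=> h.
suff: forall s : seq I, evinf (fun t => forall p, p \in s -> P p t).
  by move=> /(_ (enum I)) [T hT]; exists T => t /hT H p; apply: H; rewrite mem_enum.
elim=> [|a s IH]; first by exists 0.
have [T hT] := evinf_and (h a) IH; exists T => t /hT [H1 H2] p.
by rewrite inE => /orP[/eqP->//|]; apply: H2.
Qed.
Lemma ev0_fin (I : finType) (P : I -> R -> Prop) :
  (forall p, ev0 (P p)) -> ev0 (fun t => forall p, P p t).
Proof.
move=> h.
suff: forall s : seq I, ev0 (fun t => forall p, p \in s -> P p t).
  by move=> /(_ (enum I)) [e [ep he]]; exists e; split => // t t0 /(he _ t0) H p; apply: H; rewrite mem_enum.
elim=> [|a s IH]; first by exists 1.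
have [e [ep he]] := ev0_and (h a) IH; exists e; split => // t t0 /(he _ t0) [H1 H2] p.
by rewrite inE => /orP[/eqP->//|]; apply: H2.
Qed.
Lemma evinf_ex P : evinf P -> exists t, P t.
Proof. by move=> [T h]; exists (T + 1); apply: h; rewrite ltrDl. Qed.
Lemma ev0_ex P : ev0 P -> exists e, 0 < e /\ P e.
Proof. by move=> [e [ep h]]; exists e; split => //; apply: h. Qed.

Lemma le_sum_nonneg (I : finType) (F : I -> R) a :
  (forall b, 0 <= F b) -> F a <= \sum_b F b.
Proof. by move=> h; rewrite (bigD1 a) //= lerDl sumr_ge0. Qed.
End Ev.
Lemma card_cset (T : finType) (P : T -> bool) : #|[set x | P x]%classic| = #|[set x | P x]|.
Proof. apply: eq_card => x; rewrite inE; apply/idP/idP => [/set_mem //|h]; exact/mem_set. Qed.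
Section Slab.
Variables (R : realType) (d n : nat) (u : 'I_n -> 'rV[R]_d) (p : 'I_n).
Hypothesis gp : general_position u.

Lemma slab_f (f : {ffun 'I_d.+1 -> 'I_n}) :
  ev0 (fun δ : R => injective f -> forall v : 'rV[R]_d, dotv v v = 1 ->
     ~ (forall m, `|dotv v (u (f m) - u p)| <= δ)).
Proof.
case: (boolP (injectiveb f)) => [/injectiveP finj | /injectiveP nf]; last first.
  by exists 1; split=> // x _ _ /nf.
pose w m := u (f (lift ord0 m)) - u (f ord0).
pose W : 'M[R]_d := \matrix_(m, k) (w m) 0 k.
have We y m : (y *m W^T) 0 m = dotv y (w m).
  by rewrite /dotv !mxE; apply: eq_bigr => k _; rewrite !mxE.
have detW : \det W^T != 0.
  apply/negP => /det0P [y y0 hy].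
  have : (d.+1 <= #|[set j | dotv y (u j) == dotv y (u (f ord0))]|)%N.
    rewrite -{1}(card_ord d.+1) -cardsT -(card_imset _ finj).
    apply: subset_leq_card; apply/fintype.subsetP => j /imsetP [m _ ->]; rewrite inE.
    case: (unliftP ord0 m) => [m'|] -> //.
    have := congr1 (fun M : 'rV[R]_d => M 0 m') hy; rewrite We mxE /w dotvBr => /eqP.
    by rewrite subr_eq0.
  by move=> h; have := leq_ltn_trans (gp (dotv y (u (f ord0))) y0) h; rewrite card_cset ltnn.
have Wu : W^T \in unitmx by rewrite unitmxE unitfE.
pose Wi := invmx W^T.
pose K := \sum_k \sum_m `|Wi m k|.
have K0 : 0 <= K by apply: sumr_ge0 => k _; apply: sumr_ge0.
pose D : R := (d.+1)%:R.
have D1 : 1 <= D by rewrite /D ler1n.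
exists (2 * (K + 1) * D)^-1; split.
  rewrite invr_gt0; apply: mulr_gt0; [apply: mulr_gt0 => //; lra | lra].
move=> δ δ0 δe _ v v1 hv.
pose e := v *m W^T.
have he m : `|e 0 m| <= 2 * δ.
  rewrite /e We /w.
  rewrite (_ : u _ - u (f ord0) = (u (f (lift ord0 m)) - u p) - (u (f ord0) - u p));
    last by rewrite opprB addrA subrK.
  rewrite dotvBr.
  move: (hv (lift ord0 m)) (hv ord0); rewrite !ler_norml => /andP[a1 a2] /andP[b1 b2].
  by apply/andP; split; lra.
have vE : v = e *m Wi by rewrite /e /Wi mulmxK.
have hq k : `|v 0 k| <= 2 * δ * K.
  rewrite vE mxE; apply: le_trans (ler_norm_sum _ _ _) _.
  apply: (@le_trans _ _ (\sum_m 2 * δ * `|Wi m k|)).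
    by apply: ler_sum => m _; rewrite normrM; apply: ler_wpM2r.
  rewrite -mulr_sumr; apply: ler_wpM2l; first lra.
  rewrite /K [X in _ <= X](bigD1 k) //= lerDl; apply: sumr_ge0 => k' _; exact: sumr_ge0.
set q := 2 * δ * K in hq.
have q0 : 0 <= q by rewrite /q; apply: mulr_ge0 => //; lra.
have : dotv v v <= d%:R * q ^+ 2.
  apply: (@le_trans _ _ (\sum_(k < d) q ^+ 2)); last by rewrite sumr_const card_ord mulr_natl.
  apply: ler_sum => k _; have := hq k; rewrite ler_norml => /andP[a b].
  rewrite -expr2; nra.
rewrite v1 => h1.
have h2 : δ * (2 * (K + 1) * D) <= 1.
  by move: δe; rewrite -[X in _ <= X]mul1r ler_pdivlMr //; apply: mulr_gt0; [apply: mulr_gt0 => //; lra | lra].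
have dD : D = d%:R + 1 by rewrite /D -natr1.
have d0 : 0 <= d%:R :> R by [].
have qD : q * D < 1.
  have hdd : 0 < δ * D by apply: mulr_gt0 => //; lra.
  rewrite /q; nra.
have q1 : q <= 1 by nra.
have qq : q ^+ 2 <= q by rewrite expr2; nra.
have : d%:R * q ^+ 2 <= d%:R * q by apply: ler_wpM2l.
nra.
Qed.

Lemma slab : exists δ : R, 0 < δ /\ forall v, dotv v v = 1 ->
  (#|[set j | (`|dotv v (u j - u p)| <= δ)%R]| <= d)%N.
Proof.
have [δ [δ0 H]] := ev0_ex (ev0_fin slab_f).
exists δ; split => // v v1; rewrite leqNgt; apply/negP => hS.
pose f := [ffun m : 'I_d.+1 => enum_val (widen_ord hS m)].
apply: (H f _ v v1).
  move=> a b; rewrite !ffunE => /enum_val_inj /(congr1 val) /= ab.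
  exact: val_inj.
move=> m; rewrite ffunE; have := enum_valP (widen_ord hS m).
by rewrite inE.
Qed.
End Slab.
Section Main.
Variables (R : realType) (d n : nat) (X u : 'I_n -> 'rV[R]_d)
  (sel : ('I_n -> 'rV[R]_d) -> 'S_n) (i : 'I_n).
Hypothesis Xinj : injective X.
Hypothesis uinj : injective u.
Hypothesis gp : general_position u.
Hypothesis opt : forall Z : 'I_n -> 'rV[R]_d, injective Z -> is_ot u Z (sel Z).

Lemma n_gt0 : (0 < n)%N.
Proof. exact: leq_ltn_trans (leq0n _) (ltn_ord i). Qed.

Lemma mono Z j : injective Z ->
  dotv (Z (sel Z j) - Z (sel Z i)) (u i - u j) <= 0.
Proof.
move=> Zi; have opt' := opt Zi.
case: (eqVneq i j) => [->|ij]; first by rewrite subrr dotv0l.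
have := opt' (tperm i j * sel Z)%g.
rewrite /ot_cost (sum_swap (fun k a => dotv (Z a - u k) (Z a - u k))) //.
have n0 : 0 < n%:R^-1 :> R by rewrite invr_gt0 ltr0n n_gt0.
rewrite ler_pM2l //.
have := swap_id (Z (sel Z j)) (Z (sel Z i)) (u i) (u j).
lra.
Qed.

Lemma dot_ii (v : 'rV[R]_d) : dotv v (u i - u i) = 0.
Proof. by rewrite subrr dotvC dotv0l. Qed.

Lemma breaks_at (v0 : 'rV[R]_d) : dotv v0 v0 = 1 ->
  breaks u X sel i #|[set j | 0 <= dotv v0 (u j - u i)]|.
Proof.
move=> v1 M.
set H := [set j | 0 <= dotv v0 (u j - u i)].
pose Q (pt : 'I_n * 'I_n * 'I_n) (t : R) :=
  let: (a, b, j) := pt in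
  [/\ 0 < t, dotv (X a - X b) (X a - X b) < t * t,
      (j \notin H -> 0 < dotv (X a - X b) (u i - u j) + t * dotv v0 (u i - u j))
    & M < enorm ((X a - X b) - t *: v0)].
have evQ pt : evinf (Q pt).
  case: pt => [[a b] j].
  have e1 : evinf (fun t : R => 0 < t) by exists 0.
  have e2 : evinf (fun t => dotv (X a - X b) (X a - X b) < t * t).
    exists (dotv (X a - X b) (X a - X b) + 1) => t ht.
    have := dotv_ge0 (X a - X b); nra.
  have e3 : evinf (fun t => j \notin H ->
       0 < dotv (X a - X b) (u i - u j) + t * dotv v0 (u i - u j)).
    case: (boolP (j \in H)) => hj; first by exists 0.
    have g0 : 0 < dotv v0 (u i - u j).
      move: hj; rewrite inE -ltNge => hj.
      rewrite -opprB dotvC dotvNl dotvC; lra.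
    exists (`|dotv (X a - X b) (u i - u j)| / dotv v0 (u i - u j)) => t.
    rewrite ltr_pdivrMr // => ht _.
    have := ler_norm (- dotv (X a - X b) (u i - u j)); rewrite normrN; lra.
  have e4 : evinf (fun t => M < enorm ((X a - X b) - t *: v0)).
    move: (X a - X b) => y.
    exists (2 * `|dotv y v0| + M ^+ 2 + 1) => t ht.
    case: (ltP M 0) => M0; first by apply: lt_le_trans M0 _; exact: sqrtr_ge0.
    apply: enorm_gt_sqr => //.
    rewrite !(dotvBl, dotvBr, dotvZl, dotvZr) v1 (dotvC v0 y).
    have := dotv_ge0 y; have := ler_norm (dotv y v0); have := ler_norm (- dotv y v0).
    rewrite normrN; have := sqr_ge0 M; rewrite expr2 => *.
    rewrite expr2 in ht; nra.
  have [T hT] := evinf_and e1 (evinf_and e2 (evinf_and e3 e4)).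
  by exists T => t /hT [? [? [? ?]]]; split.
have [t Qt] := evinf_ex (evinf_fin evQ).
have t0 : 0 < t by have := Qt (i, i, i); case.
have noncoll a b : X a + t *: v0 != X b.
  apply/eqP => e.
  have e' : t *: v0 = X b - X a by rewrite -e addrAC subrr add0r.
  have := congr1 (fun w => dotv w w) e'; rewrite /= dotvZl dotvZr v1 mulr1.
  have := Qt (b, a, i); case => _ h _ _; lra.
pose Z j := if j \in H then X j + t *: v0 else X j.
have Zinj : injective Z.
  move=> a b; rewrite /Z; case: ifP => ha; case: ifP => hb.
  - by move/addIr/Xinj.
  - by move=> e; have := noncoll a b; rewrite e eqxx.
  - by move=> e; have := noncoll b a; rewrite e eqxx.
  - exact: Xinj.
exists Z; split.
  split => //; rewrite card_cset.
  have -> : [set j | [exists k, Z j == X k]] = ~: H.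
    apply/setP => j; rewrite inE finset.in_setC /Z; case: (boolP (j \in H)) => hj /=.
      by apply/existsP => -[k]; rewrite (negbTE (noncoll _ _)).
    by apply/existsP; exists j.
  by have := cardsC H; rewrite card_ord; lia.
set s := sel Z.
have iH : i \in H by rewrite inE dot_ii.
have siH : s i \in H.
  apply/negPn/negP => siH.
  have : ~~ ((s @^-1: H) \subset H).
    apply/negP => sub.
    have : (#|s @^-1: H| < #|H|)%N.
      apply: proper_card; rewrite properE sub /=.
      apply/negP => /fintype.subsetP /(_ i iH); rewrite inE.
      by rewrite (negbTE siH).
    by rewrite card_preimset ?ltnn //; exact: perm_inj.
  case/subsetPn => j; rewrite inE => sjH jH.
  have := mono j Zinj; rewrite -/s /Z sjH (negbTE siH).
  rewrite (_ : X (s j) + t *: v0 - X (s i) = (X (s j) - X (s i)) + t *: v0);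
    last by rewrite addrAC.
  rewrite dotvDl dotvZl.
  have := Qt (s j, s i, j); case => _ _ h _; have := h jH; lra.
rewrite /Z siH.
rewrite (_ : X (sel X i) - (X (s i) + t *: v0) = (X (sel X i) - X (s i)) - t *: v0);
  last by rewrite opprD addrA.
by have := Qt (sel X i, s i, i); case.
Qed.

Definition Hs (v : 'rV[R]_d) := [set j | 0 <= dotv v (u j - u i)].

Lemma breaks_bound l : breaks u X sel i l ->
  exists v, dotv v v = 1 /\ (#|Hs v| <= l + d.-1)%N.
Proof.
move=> br.
have [δ [δ0 hδ]] := @slab R d n u i gp.
pose C := \sum_a \sum_j `|dotv (X a) (u j - u i)|.
pose T0 := \sum_a \sum_b enorm (X a - X b).
have hC a j : `|dotv (X a) (u j - u i)| <= C.
  apply: (@le_trans _ _ (\sum_j `|dotv (X a) (u j - u i)|)).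
    by rewrite [leRHS](bigD1 j) //= lerDl sumr_ge0.
  by rewrite /C [leRHS](bigD1 a) //= lerDl; apply: sumr_ge0 => *; apply: sumr_ge0.
have hT0 a b : enorm (X a - X b) <= T0.
  apply: (@le_trans _ _ (\sum_b enorm (X a - X b))).
    by rewrite [leRHS](bigD1 b) //= lerDl sumr_ge0 // => *; apply: sqrtr_ge0.
  rewrite /T0 [leRHS](bigD1 a) //= lerDl; apply: sumr_ge0 => *; apply: sumr_ge0 => *.
  exact: sqrtr_ge0.
have C0 : 0 <= C by apply: le_trans (hC i i); apply: normr_ge0.
have T00 : 0 <= T0 by apply: le_trans (hT0 i i); apply: sqrtr_ge0.
have CD0 : 0 <= 2 * C / δ by apply: divr_ge0; [lra | lra].
pose M := T0 + 2 * C / δ.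
have [Z [[Zinj Zcard] hM]] := br M.
pose P := [set a | [exists k, Z a == X k]].
have siP : sel Z i \notin P.
  apply/negP; rewrite inE => /existsP [k /eqP e].
  move: hM; rewrite e; have := hT0 (sel X i) k; rewrite /M; lra.
pose w := Z (sel Z i) - X (sel X i).
have enw : enorm w = enorm (X (sel X i) - Z (sel Z i)).
  by rewrite /enorm /w -opprB dotvNl dotvC dotvNl opprK.
pose r := enorm w.
have rM : M < r by rewrite /r enw.
have r0 : 0 < r by rewrite /M in rM; lra.
have r2 : dotv w w = r ^+ 2 by rewrite /r /enorm sqr_sqrtr // dotv_ge0.
pose v := r^-1 *: w.
have v1 : dotv v v = 1.
  rewrite /v dotvZl dotvZr r2; have rn : r != 0 by rewrite gt_eqF.
  by field.
exists v; split => //.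
have key j : sel Z j \in P -> dotv v (u j - u i) <= δ.
  rewrite inE => /existsP [m /eqP e].
  have mo := mono j Zinj; rewrite e in mo.
  have b1 := hC m j; have b2 := hC (sel X i) j.
  rewrite ler_norml in b1; rewrite ler_norml in b2.
  case/andP: b1 => b1 b1'; case/andP: b2 => b2 b2'.
  rewrite !(dotvBl, dotvBr) in mo b1 b1' b2 b2'.
  have hw : dotv w (u j - u i) <= 2 * C.
    rewrite /w !(dotvBl, dotvBr); lra.
  have : 2 * C / δ < r by rewrite /M in rM; lra.
  rewrite ltr_pdivrMr // => hr.
  rewrite /v dotvZl mulrC ler_pdivrMr //; lra.
pose A := [set j | sel Z j \notin P].
pose S := [set j | `|dotv v (u j - u i)| <= δ].
have sub : Hs v \subset A :|: (S :\ i).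
  apply/fintype.subsetP => j; rewrite inE => hj; rewrite finset.in_setU [j \in A]inE finset.in_setD1 [j \in S]inE.
  case: (boolP (sel Z j \in P)) => sj //=.
  apply/andP; split.
    by apply/eqP => ji; move: siP; rewrite -ji sj.
  by rewrite ler_norml; have := key j sj => kk; apply/andP; split; lra.
have cA : (#|A| <= l)%N.
  have -> : A = sel Z @^-1: (~: P) by apply/setP => j; rewrite !inE.
  rewrite card_preimset; last exact: perm_inj.
  have := cardsC P; rewrite card_ord; rewrite card_cset in Zcard.
  rewrite -/P in Zcard; rewrite Zcard; move: #|~: P| => x h; by rewrite -(leq_add2l (n - l)) h addnC -leq_subLR.
have cS : (#|S :\ i| <= d.-1)%N.
  have := cardsD1 i S; have := hδ v v1; rewrite -/S.
  have -> : i \in S by rewrite inE dot_ii normr0; exact: ltW.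
  lia.
apply: leq_trans (subset_leq_card sub) _; rewrite cardsU.
apply: leq_trans (leq_subr _ _) _; exact: leq_add cA cS.
Qed.

Lemma enorm1 (v : 'rV[R]_d) : enorm v = 1 -> dotv v v = 1.
Proof.
move=> e; rewrite -[dotv v v]sqr_sqrtr ?dotv_ge0 //.
by rewrite /enorm in e; rewrite e expr1n.
Qed.

Lemma td_eq : (0 < d)%N -> exists v0, [/\ dotv v0 v0 = 1,
  tukey_depth u (u i) = (#|Hs v0|)%:R / n%:R &
  forall v, dotv v v = 1 -> (#|Hs v0| <= #|Hs v|)%N].
Proof.
move=> d0.
have unit_ex : exists v : 'rV[R]_d, dotv v v = 1.
  exists (delta_mx 0 (Ordinal d0)).
  rewrite /dotv (bigD1 (Ordinal d0)) //= big1 ?addr0.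
    by rewrite !mxE !eqxx /= mulr1.
  by move=> k kn; rewrite !mxE (negbTE kn) andbF mul0r.
pose Pm m := `[< exists v, dotv v v = 1 /\ #|Hs v| = m >].
have exP : exists m, Pm m.
  by case: unit_ex => v v1; exists #|Hs v|; apply/asboolP; exists v.
case: (ex_minnP exP) => m /asboolP [v0 [v01 hm]] mmin.
have minv v : dotv v v = 1 -> (#|Hs v0| <= #|Hs v|)%N.
  by move=> v1; rewrite hm; apply: mmin; apply/asboolP; exists v.
exists v0; split => //.
have n0 : 0 <= n%:R^-1 :> R by rewrite invr_ge0.
rewrite /tukey_depth; apply/le_anti/andP; split.
  apply: (ge_inf _).
    exists 0 => y [v _ <-]; exact: mulr_ge0.
  exists v0; last by rewrite card_cset.
  by rewrite /= /enorm v01 sqrtr1.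
apply: lb_le_inf.
  by exists (#|Hs v0|%:R / n%:R); exists v0; [rewrite /= /enorm v01 sqrtr1 | rewrite card_cset].
move=> y [v /= /enorm1 v1 <-]; rewrite card_cset.
by apply: ler_wpM2r => //; rewrite ler_nat; exact: minv.
Qed.

Lemma final : (0 < d)%N -> exists b : R, is_BP u X sel i b /\
    tukey_depth u (u i) - (d - 1)%:R / n%:R <= b <= tukey_depth u (u i).
Proof.
move=> d0.
have [v0 [v01 td minv]] := td_eq d0.
set k := #|Hs v0| in td minv.
have brk : breaks u X sel i k := breaks_at v01.
have k1 : (1 <= k)%N by apply/card_gt0P; exists i; rewrite inE dot_ii.
have kn : (k <= n)%N by rewrite -[X in (_ <= X)%N](card_ord n); exact: max_card.
pose Pl l := (1 <= l <= n)%N && `[< breaks u X sel i l >].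
have exl : exists l, Pl l by exists k; rewrite /Pl k1 kn; apply/asboolP.
case: (ex_minnP exl) => l /andP [/andP[l1 ln] /asboolP bl] lmin.
have lk : (l <= k)%N by apply: lmin; rewrite /Pl k1 kn; apply/asboolP.
have [v [v1 hv]] := breaks_bound bl.
have kl : (k <= l + (d - 1))%N by rewrite subn1; exact: leq_trans (minv v v1) hv.
exists (l%:R / n%:R); split.
  exists l; split => //; first by rewrite l1 ln.
  move=> l' /andP[l'1 l'l] bl'.
  have : (l <= l')%N.
    by apply: lmin; rewrite /Pl l'1 (ltnW (leq_trans l'l ln)); apply/asboolP.
  by rewrite leqNgt l'l.
have n0 : 0 <= n%:R^-1 :> R by rewrite invr_ge0.
rewrite td; apply/andP; split.
  rewrite -mulrBl; apply: ler_wpM2r => //.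
  move: kl; rewrite -(ler_nat R) natrD => kl; lra.
by apply: ler_wpM2r => //; rewrite ler_nat.
Qed.
End Main.

Theorem mainTheorem1 (R : realType) (d n : nat)
    (X u : 'I_n -> 'rV[R]_d) (sel : ('I_n -> 'rV[R]_d) -> 'S_n) (i : 'I_n) :
  (0 < d)%N -> (0 < n)%N ->
  injective X -> injective u -> general_position u ->
  (forall Z : 'I_n -> 'rV[R]_d, injective Z -> is_ot u Z (sel Z)) ->
  exists b : R, is_BP u X sel i b /\
    tukey_depth u (u i) - (d - 1)%:R / n%:R <= b <= tukey_depth u (u i).
Proof.
move=> d0 n0 Xi ui g o.
exact: (@final R d n X u sel i Xi g o d0).
Qed.
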